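(* Let $x_0<x_1<\cdots<x_6$ be real numbers and write $d_{i,j}=x_j-x_i$ for $i<j$. If $d_{0,1}d_{2,3}d_{3,4}d_{5,6}>d_{1,2}d_{4,5}d_{0,3}d_{3,6}$, then at least one of the following holds: (1) $d_{1,2}<\min\{d_{0,1},d_{2,3}\}$; (2) $d_{4,5}<\min\{d_{3,4},d_{5,6}\}$. *)

(* Defs.v *)
From Stdlib Require Import Reals.
Open Scope R_scope.

(* Main.v *)
Require Import Defs.
From Stdlib Require Import Reals Lra Psatz.
Open Scope R_scope.

Lemma aux (a b c : R) : 0 < a -> 0 < b -> 0 < c ->
  ~ (b < Rmin a c) -> a * c <= b * (a + b + c).
Proof.
  intros Ha Hb Hc H.
  unfold Rmin in H; destruct (Rle_dec a c).
  - assert (a <= b) by lra. nra.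
  - assert (c <= b) by lra. nra.
Qed.

Theorem lemma3 (x0 x1 x2 x3 x4 x5 x6 : R) :
  x0 < x1 -> x1 < x2 -> x2 < x3 -> x3 < x4 -> x4 < x5 -> x5 < x6 ->
  (x1 - x0) * (x3 - x2) * (x4 - x3) * (x6 - x5) >
    (x2 - x1) * (x5 - x4) * (x3 - x0) * (x6 - x3) ->
  (x2 - x1 < Rmin (x1 - x0) (x3 - x2)) \/
  (x5 - x4 < Rmin (x4 - x3) (x6 - x5)).
Proof.
  intros H1 H2 H3 H4 H5 H6 H.
  destruct (Rlt_dec (x2 - x1) (Rmin (x1 - x0) (x3 - x2))) as [A|A]; [now left|].
  destruct (Rlt_dec (x5 - x4) (Rmin (x4 - x3) (x6 - x5))) as [B|B]; [now right|].
  exfalso.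
  pose proof (aux (x1-x0) (x2-x1) (x3-x2) ltac:(lra) ltac:(lra) ltac:(lra) A) as P.
  pose proof (aux (x4-x3) (x5-x4) (x6-x5) ltac:(lra) ltac:(lra) ltac:(lra) B) as Q.
  replace (x1 - x0 + (x2 - x1) + (x3 - x2)) with (x3 - x0) in P by ring.
  replace (x4 - x3 + (x5 - x4) + (x6 - x5)) with (x6 - x3) in Q by ring.
  assert (0 <= (x1-x0)*(x3-x2)) by nra.
  assert (0 <= (x4-x3)*(x6-x5)) by nra.
  assert ((x1-x0)*(x3-x2)*((x4-x3)*(x6-x5)) <= ((x2-x1)*(x3-x0))*((x5-x4)*(x6-x3))).
  { apply Rmult_le_compat; lra. }
  nra.
Qed.
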